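(* Let $S=K[x_1,\dots,x_n]$ be a standard graded polynomial ring over a field $K$, and let $I\subset S$ be a graded ideal generated in a single degree, with minimal homogeneous generating set $f_1,\dots,f_m$. Assume $I$ has linear relations, i.e. the module of relations $\{(r_1,\dots,r_m)\in S^m:\sum_i r_if_i=0\}$ is generated by relations $(\ell_1,\dots,\ell_m)$ whose entries are linear forms. Then for every $1\le i\le m$, the colon ideal $(f_1,\dots,f_{i-1},f_{i+1},\dots,f_m):f_i$ is generated by linear forms. *)

(* Defs.v *)
From HB Require Import structures.
From mathcomp Require Import all_boot all_order all_algebra.
From mathcomp Require Import mpoly.
Set Implicit Arguments. Unset Strict Implicit. Unset Printing Implicit Defensive.
Import GRing.Theory.
Local Open Scope ring_scope.

(* p is homogeneous of (standard) degree d (the zero polynomial counts). *)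
Definition homog_deg {K : fieldType} {n : nat} (d : nat) (p : {mpoly K[n]}) : Prop :=
  p \is @ishomog1 n K d (@mdeg n).

Definition linear_form {K : fieldType} {n : nat} (p : {mpoly K[n]}) : Prop :=
  homog_deg 1 p.

Definition in_ideal {K : fieldType} {n k : nat}
  (g : 'I_k -> {mpoly K[n]}) (p : {mpoly K[n]}) : Prop :=
  exists r : 'I_k -> {mpoly K[n]}, p = \sum_(j < k) r j * g j.

Definition in_ideal_but {K : fieldType} {n m : nat}
  (f : 'I_m -> {mpoly K[n]}) (i : 'I_m) (p : {mpoly K[n]}) : Prop :=
  exists r : 'I_m -> {mpoly K[n]}, r i = 0 /\ p = \sum_(j < m) r j * f j.

Definition minimal_gens {K : fieldType} {n m : nat}
  (f : 'I_m -> {mpoly K[n]}) : Prop :=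
  forall i : 'I_m, ~ in_ideal_but f i (f i).

Definition is_relation {K : fieldType} {n m : nat}
  (f : 'I_m -> {mpoly K[n]}) (r : 'I_m -> {mpoly K[n]}) : Prop :=
  \sum_(j < m) r j * f j = 0.

Definition has_linear_relations {K : fieldType} {n m : nat}
  (f : 'I_m -> {mpoly K[n]}) : Prop :=
  exists (k : nat) (L : 'I_k -> 'I_m -> {mpoly K[n]}),
    (forall t, is_relation f (L t)) /\
    (forall t j, linear_form (L t j)) /\
    (forall r, is_relation f r ->
       exists c : 'I_k -> {mpoly K[n]},
         forall j, r j = \sum_(t < k) c t * L t j).

Definition in_colon {K : fieldType} {n m : nat}
  (f : 'I_m -> {mpoly K[n]}) (i : 'I_m) (g : {mpoly K[n]}) : Prop :=
  in_ideal_but f i (g * f i).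

Definition gen_by_linear_forms {K : fieldType} {n : nat}
  (J : {mpoly K[n]} -> Prop) : Prop :=
  exists (k : nat) (h : 'I_k -> {mpoly K[n]}),
    (forall t, linear_form (h t)) /\
    (forall g, J g <-> in_ideal h g).

(* Main.v *)
Require Import Defs.
From HB Require Import structures.
From mathcomp Require Import all_boot all_order all_algebra.
From mathcomp Require Import mpoly.
Local Open Scope ring_scope.
Import GRing.Theory.

Theorem lemma1p1 (K : fieldType) (n m : nat) (f : 'I_m -> {mpoly K[n]})
  (d : nat) (Hdeg : forall i, homog_deg d (f i))
  (Hmin : minimal_gens f)
  (Hlin : has_linear_relations f) :
  forall i : 'I_m, gen_by_linear_forms (in_colon f i).
Proof.
move=> i; case: Hlin => k [L [Hrel [Hl Hgen]]].
exists k, (fun t => L t i); split; first by move=> t; exact: Hl.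
move=> g; split.
- case=> r [ri0 Hg].
  pose r' := fun j => if j == i then r j - g else r j.
  have Hr' : is_relation f r'.
    rewrite /is_relation (bigD1 i) //= /r' eqxx.
    have -> : \sum_(j < m | j != i) (if j == i then r j - g else r j) * f j
            = \sum_(j < m | j != i) r j * f j.
      by apply: eq_bigr => j /negbTE ->.
    have : \sum_(j < m) r j * f j = r i * f i + \sum_(j < m | j != i) r j * f j.
      by rewrite (bigD1 i).
    rewrite -Hg => E.
    by rewrite mulrBl addrAC -E subrr.
  case: (Hgen _ Hr') => c Hc.
  exists (fun t => - c t).
  have := Hc i; rewrite /r' eqxx ri0 sub0r => E.
  apply: oppr_inj; rewrite E -sumrN; by under [RHS]eq_bigr do rewrite mulNr opprK.
- case=> c Hc.
  exists (fun j => if j == i then 0 else - \sum_(t < k) c t * L t j); split.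
    by rewrite eqxx.
  have H0 : \sum_(j < m) \sum_(t < k) c t * L t j * f j = 0.
    rewrite exchange_big /= big1 // => t _.
    transitivity (c t * \sum_(j < m) L t j * f j); last first.
      by have := Hrel t; rewrite /is_relation => ->; rewrite mulr0.
    rewrite mulr_sumr; by under [RHS]eq_bigr do rewrite mulrA.
  move: H0; rewrite (bigD1 i) //= => H0.
  rewrite (bigD1 i) //= eqxx mul0r add0r.
  have -> : \sum_(j < m | j != i)
      (if j == i then 0 else - \sum_(t < k) c t * L t j) * f j
      = - \sum_(j < m | j != i) \sum_(t < k) c t * L t j * f j.
    rewrite -sumrN; apply: eq_bigr => j /negbTE ->.
    by rewrite mulNr mulr_suml.
  rewrite Hc mulr_suml; apply/eqP; rewrite -addr_eq0; apply/eqP.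
  exact: H0.
Qed.
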